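(* For every $m\in\mathbb{Z}$: (i) $s_2s_1^ms_2\in U$; (ii) $s_2^{-1}s_1^ms_2^{-1}\in U'$; (iii) $s_2^{-2}s_1^ms_2^{-1}\in U'$.
   Context: Let $B_3=\langle s_1,s_2\mid s_1s_2s_1=s_2s_1s_2\rangle$, $R_4=\mathbb{Z}[a,b,c,d,d^{-1}]$, and let $H_4$ be the quotient of the group algebra $R_4B_3$ by the relations $s_i^4=as_i^3+bs_i^2+cs_i+d$ for $i=1,2$; identify $s_i$ with their images in $H_4$. For $i=1,2$ let $u_i$ be the $R_4$-subalgebra of $H_4$ generated by $s_i$. For $R_4$-submodules (or elements) $X_1,\dots,X_n$ of $H_4$, $X_1\cdots X_n$ denotes the $R_4$-submodule spanned by all products $x_1\cdots x_n$ with $x_j\in X_j$, and sums are sums of submodules. Define $U'=u_1u_2u_1+u_1s_2s_1^{-1}s_2u_1+u_1s_2^{-1}s_1s_2^{-1}u_1+u_1s_2^{-1}s_1^{-2}s_2^{-1}$ and $U=U'+u_1s_2s_1^{-2}s_2u_1+u_1s_2^{-2}s_1^{-2}s_2^{-2}u_1$. *)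

(* Defs.v *)
From mathcomp Require Import all_boot all_order all_algebra.
Set Implicit Arguments. Unset Strict Implicit. Unset Printing Implicit Defensive.
Import GRing.Theory.
Local Open Scope ring_scope.

Section Submodules.
Variables (R : comUnitRingType) (A : algType R).

Definition rspan (P : A -> Prop) : A -> Prop :=
  fun x => exists s : seq (R * A),
    (forall p, p \in s -> P p.2) /\ x = \sum_(p <- s) p.1 *: p.2.

Definition prodS (Xs : seq (A -> Prop)) : A -> Prop :=
  rspan (fun w => exists xs : seq A,
    size xs = size Xs /\
    (forall i, (i < size Xs)%N -> nth (fun _ => False) Xs i (nth 0 xs i)) /\
    w = \prod_(x <- xs) x).

Definition addS (X Y : A -> Prop) : A -> Prop :=
  fun z => exists x y, X x /\ Y y /\ z = x + y.

Definition elt (e : A) : A -> Prop := fun x => x = e.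

Definition subalg1 (s : A) : A -> Prop := rspan (fun x => exists n : nat, x = s ^+ n).

(* integer power of s, given its inverse t *)
Definition ipow (s t : A) (m : int) : A :=
  match m with Posz n => s ^+ n | Negz n => t ^+ n.+1 end.

(* U' and U of the paper; t1, t2 are the inverses of s1, s2 *)
Definition Uprime (s1 s2 t1 t2 : A) : A -> Prop :=
  let u1 := subalg1 s1 in let u2 := subalg1 s2 in
  addS (addS (addS
    (prodS [:: u1; u2; u1])
    (prodS [:: u1; elt s2; elt t1; elt s2; u1]))
    (prodS [:: u1; elt t2; elt s1; elt t2; u1]))
    (prodS [:: u1; elt t2; elt (t1 ^+ 2); elt t2]).

Definition Ufull (s1 s2 t1 t2 : A) : A -> Prop :=
  let u1 := subalg1 s1 in
  addS (addS (Uprime s1 s2 t1 t2)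
    (prodS [:: u1; elt s2; elt (t1 ^+ 2); elt s2; u1]))
    (prodS [:: u1; elt (t2 ^+ 2); elt (t1 ^+ 2); elt (t2 ^+ 2); u1]).

End Submodules.

(* Main.v *)
Require Import Defs.
From mathcomp Require Import all_boot all_order all_algebra.
Set Implicit Arguments. Unset Strict Implicit. Unset Printing Implicit Defensive.
Import GRing.Theory.
Local Open Scope ring_scope.

Definition closedS (R : comUnitRingType) (A : algType R) (Q : A -> Prop) :=
  [/\ Q 0, (forall x y, Q x -> Q y -> Q (x + y)) & (forall k x, Q x -> Q (k *: x))].

Lemma closedD (R : comUnitRingType) (A : algType R) (Q : A -> Prop) x y :
  closedS Q -> Q x -> Q y -> Q (x + y).
Proof. by case=> _ h _; apply: h. Qed.

Lemma closedZ (R : comUnitRingType) (A : algType R) (Q : A -> Prop) k x :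
  closedS Q -> Q x -> Q (k *: x).
Proof. by case=> _ _ h; apply: h. Qed.

Lemma closedB (R : comUnitRingType) (A : algType R) (Q : A -> Prop) x y :
  closedS Q -> Q x -> Q y -> Q (x - y).
Proof. by move=> hQ hx hy; rewrite -scaleN1r; apply: closedD => //; apply: closedZ. Qed.

Lemma rspan_closed (R : comUnitRingType) (A : algType R) (P : A -> Prop) :
  closedS (rspan P).
Proof.
split.
- by exists [::]; rewrite big_nil.
- move=> x y [s [Hs ->]] [t [Ht ->]]; exists (s ++ t); split; last by rewrite big_cat.
  by move=> p; rewrite mem_cat => /orP [] ?; [apply: Hs | apply: Ht].
- move=> k x [s [Hs ->]]; exists [seq (k * p.1, p.2) | p <- s]; split.
    by move=> p /mapP [q qs ->] /=; apply: Hs.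
  by rewrite big_map scaler_sumr; apply: eq_bigr => p _; rewrite scalerA.
Qed.

Lemma rspan_sub (R : comUnitRingType) (A : algType R) (P : A -> Prop) x :
  P x -> rspan P x.
Proof.
move=> Px; exists [:: (1, x)]; split; last by rewrite big_seq1 scale1r.
by move=> p; rewrite mem_seq1 => /eqP ->.
Qed.

Lemma rspan_ind (R : comUnitRingType) (A : algType R) (P Q : A -> Prop) :
  closedS Q -> (forall x, P x -> Q x) -> forall x, rspan P x -> Q x.
Proof.
move=> [Q0 QD QZ] PQ x [s [Hs ->]].
elim: s Hs => [|p s IH] Hs; first by rewrite big_nil.
rewrite big_cons; apply: QD.
  by apply: QZ; apply: PQ; apply: Hs; rewrite mem_head.
by apply: IH => q Hq; apply: Hs; rewrite in_cons Hq orbT.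
Qed.

Lemma addS_closed (R : comUnitRingType) (A : algType R) (X Y : A -> Prop) :
  closedS X -> closedS Y -> closedS (addS X Y).
Proof.
move=> [X0 XD XZ] [Y0 YD YZ]; split.
- by exists 0, 0; rewrite addr0.
- move=> _ _ [x1 [y1 [h1 [h2 ->]]]] [x2 [y2 [h3 [h4 ->]]]].
  by exists (x1 + x2), (y1 + y2); rewrite addrACA; split; [apply: XD|split; [apply: YD|]].
- move=> k _ [x1 [y1 [h1 [h2 ->]]]].
  by exists (k *: x1), (k *: y1); rewrite scalerDr; split; [apply: XZ|split; [apply: YZ|]].
Qed.

Lemma addS_l (R : comUnitRingType) (A : algType R) (X Y : A -> Prop) x :
  closedS Y -> X x -> addS X Y x.
Proof. by move=> [Y0 _ _] hx; exists x, 0; rewrite addr0. Qed.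

Lemma addS_r (R : comUnitRingType) (A : algType R) (X Y : A -> Prop) y :
  closedS X -> Y y -> addS X Y y.
Proof. by move=> [X0 _ _] hy; exists 0, y; rewrite add0r. Qed.

Lemma mem3 (R : comUnitRingType) (A : algType R) (X1 X2 X3 : A -> Prop) x1 x2 x3 :
  X1 x1 -> X2 x2 -> X3 x3 -> prodS [:: X1; X2; X3] (x1 * x2 * x3).
Proof.
move=> h1 h2 h3; apply: rspan_sub; exists [:: x1; x2; x3]; split => //; split.
  by case=> [|[|[|i]]] //=.
by rewrite !big_cons big_nil mulr1 !mulrA.
Qed.

Lemma mem4 (R : comUnitRingType) (A : algType R) (X1 X2 X3 X4 : A -> Prop) x1 x2 x3 x4 :
  X1 x1 -> X2 x2 -> X3 x3 -> X4 x4 -> prodS [:: X1; X2; X3; X4] (x1 * x2 * x3 * x4).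
Proof.
move=> h1 h2 h3 h4; apply: rspan_sub; exists [:: x1; x2; x3; x4]; split => //; split.
  by case=> [|[|[|[|i]]]] //=.
by rewrite !big_cons big_nil mulr1 !mulrA.
Qed.

Lemma mem5 (R : comUnitRingType) (A : algType R) (X1 X2 X3 X4 X5 : A -> Prop) x1 x2 x3 x4 x5 :
  X1 x1 -> X2 x2 -> X3 x3 -> X4 x4 -> X5 x5 ->
  prodS [:: X1; X2; X3; X4; X5] (x1 * x2 * x3 * x4 * x5).
Proof.
move=> h1 h2 h3 h4 h5; apply: rspan_sub; exists [:: x1; x2; x3; x4; x5]; split => //; split.
  by case=> [|[|[|[|[|i]]]]] //=.
by rewrite !big_cons big_nil mulr1 !mulrA.
Qed.

Lemma prodS_closed (R : comUnitRingType) (A : algType R) (Xs : seq (A -> Prop)) :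
  closedS (prodS Xs).
Proof. exact: rspan_closed. Qed.

Lemma Up_closed (R : comUnitRingType) (A : algType R) (s1 s2 t1 t2 : A) :
  closedS (Uprime s1 s2 t1 t2).
Proof. rewrite /Uprime /=; (do 3 try apply: addS_closed); apply: prodS_closed. Qed.

Lemma Uf_closed (R : comUnitRingType) (A : algType R) (s1 s2 t1 t2 : A) :
  closedS (Ufull s1 s2 t1 t2).
Proof.
rewrite /Ufull /=; (do 2 try apply: addS_closed); first exact: Up_closed; apply: prodS_closed.
Qed.

Section U.
Context (R : comUnitRingType) (A : algType R) (s1 s2 t1 t2 : A) (x : A).
Let u1 := subalg1 s1.
Let u2 := subalg1 s2.

Lemma Up1 : prodS [:: u1; u2; u1] x -> Uprime s1 s2 t1 t2 x.
Proof.
move=> h; rewrite /Uprime /=.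
do 3 (apply: addS_l; first exact: prodS_closed); exact: h.
Qed.
Lemma Up2 : prodS [:: u1; elt s2; elt t1; elt s2; u1] x -> Uprime s1 s2 t1 t2 x.
Proof.
move=> h; rewrite /Uprime /=.
do 2 (apply: addS_l; first exact: prodS_closed).
apply: addS_r; first exact: prodS_closed. exact: h.
Qed.
Lemma Up3 : prodS [:: u1; elt t2; elt s1; elt t2; u1] x -> Uprime s1 s2 t1 t2 x.
Proof.
move=> h; rewrite /Uprime /=.
apply: addS_l; first exact: prodS_closed.
apply: addS_r; first by (try apply: addS_closed); exact: prodS_closed. exact: h.
Qed.
Lemma Up4 : prodS [:: u1; elt t2; elt (t1 ^+ 2); elt t2] x -> Uprime s1 s2 t1 t2 x.
Proof.
move=> h; rewrite /Uprime /=.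
apply: addS_r; first by (do 2 try apply: addS_closed); exact: prodS_closed. exact: h.
Qed.
Lemma Uf1 : Uprime s1 s2 t1 t2 x -> Ufull s1 s2 t1 t2 x.
Proof.
move=> h; rewrite /Ufull /=; do 2 (apply: addS_l; first exact: prodS_closed); exact: h.
Qed.
Lemma Uf2 : prodS [:: u1; elt s2; elt (t1 ^+ 2); elt s2; u1] x -> Ufull s1 s2 t1 t2 x.
Proof.
move=> h; rewrite /Ufull /=; apply: addS_l; first exact: prodS_closed.
apply: addS_r; first exact: Up_closed. exact: h.
Qed.
End U.

Lemma sub_pow (R : comUnitRingType) (A : algType R) (s : A) n : subalg1 s (s ^+ n).
Proof. by apply: rspan_sub; exists n. Qed.

Lemma subalg1_closed (R : comUnitRingType) (A : algType R) (s : A) : closedS (subalg1 s).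
Proof. exact: rspan_closed. Qed.

Lemma subalg_mul (R : comUnitRingType) (A : algType R) (s x y : A) :
  subalg1 s x -> subalg1 s y -> subalg1 s (x * y).
Proof.
move=> hx hy; pose Q z := subalg1 s (z * y).
have QC : closedS Q.
  split; rewrite /Q.
  - by rewrite mul0r; case: (subalg1_closed s).
  - by move=> u v hu hv; rewrite mulrDl; apply: closedD => //; exact: subalg1_closed.
  - by move=> k u hu; rewrite -scalerAl; apply: closedZ => //; exact: subalg1_closed.
apply: (@rspan_ind R A (fun z => exists n : nat, z = s ^+ n) Q QC _ x hx) => _ [n ->]; rewrite /Q.
pose Q' z := subalg1 s (s ^+ n * z).
have QC' : closedS Q'.
  split; rewrite /Q'.
  - by rewrite mulr0; case: (subalg1_closed s).
  - by move=> u v hu hv; rewrite mulrDr; apply: closedD => //; exact: subalg1_closed.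
  - by move=> k u hu; rewrite -scalerAr; apply: closedZ => //; exact: subalg1_closed.
apply: (@rspan_ind R A (fun z => exists n : nat, z = s ^+ n) Q' QC' _ y hy) => _ [m ->]; rewrite /Q' -exprD; exact: sub_pow.
Qed.

Lemma inv_uniq (R : comUnitRingType) (A : algType R) (x y z : A) :
  x * y = 1 -> y * z = 1 -> x = z.
Proof. by move=> xy yz; rewrite -[x]mulr1 -yz mulrA xy mul1r. Qed.

Lemma solve_eq (R : comUnitRingType) (A : algType R) (d : R) (X P Y : A) :
  d \is a GRing.unit -> X = P + d *: Y -> Y = d^-1 *: (X - P).
Proof. by move=> du ->; rewrite [P + _]addrC addrK scalerA mulVr // scale1r. Qed.

Lemma closed_conj (R : comUnitRingType) (A : algType R) (Q : A -> Prop) (L M : A) :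
  closedS Q -> closedS (fun x => Q (L * x * M)).
Proof.
move=> hQ; split.
- by rewrite mulr0 mul0r; case: hQ.
- by move=> x y hx hy; rewrite mulrDr mulrDl; apply: closedD.
- by move=> k x hx; rewrite -scalerAr -scalerAl; apply: closedZ.
Qed.

Lemma st_pow (R : comUnitRingType) (A : algType R) (s t : A) k :
  s * t = 1 -> s ^+ k * t ^+ k = 1.
Proof.
move=> st; elim: k => [|k IH]; first by rewrite !expr0 mulr1.
by rewrite exprSr exprS mulrA -(mulrA _ s) st mulr1 IH.
Qed.

Lemma tcancel (R : comUnitRingType) (A : algType R) (s t : A) n k :
  t * s = 1 -> t ^+ n * s ^+ (n + k) = s ^+ k.
Proof. by move=> ts; rewrite exprD mulrA st_pow // mul1r. Qed.

Lemma one_rel (R : comUnitRingType) (A : algType R) (a b c d : R) (s t : A) :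
  s * t = 1 -> s ^+ 4 = a *: s ^+ 3 + b *: s ^+ 2 + c *: s + d%:A ->
  1 = a *: t + b *: t ^+ 2 + c *: t ^+ 3 + d *: t ^+ 4.
Proof.
move=> st rel.
rewrite -(st_pow 4 st) rel !mulrDl -!scalerAl mul1r.
have -> : s ^+ 3 * t ^+ 4 = t by rewrite [t ^+ 4]exprSr mulrA st_pow // mul1r.
have -> : s ^+ 2 * t ^+ 4 = t ^+ 2.
  have -> : t ^+ 4 = t ^+ 2 * t ^+ 2 by rewrite -exprD.
  by rewrite mulrA st_pow // mul1r.
by rewrite [t ^+ 4]exprS mulrA st mul1r.
Qed.

Lemma rel2 (R : comUnitRingType) (A : algType R) (a b c d : R) (s t : A) :
  t * s = 1 -> s ^+ 4 = a *: s ^+ 3 + b *: s ^+ 2 + c *: s + d%:A ->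
  s ^+ 2 = a *: s + b *: 1 + c *: t + d *: t ^+ 2.
Proof.
move=> ts rel.
have e := congr1 (GRing.mul (t ^+ 2)) rel; move: e => /=.
rewrite !mulrDr -!scalerAr mulr1.
have -> : t ^+ 2 * s ^+ 4 = s ^+ 2 := tcancel 2 2 ts.
have -> : t ^+ 2 * s ^+ 3 = s := tcancel 2 1 ts.
have -> : t ^+ 2 * s ^+ 2 = 1 := tcancel 2 0 ts.
by rewrite expr2 -mulrA ts mulr1.
Qed.

Lemma red (R : comUnitRingType) (A : algType R) (a b c d : R) (s t : A) (G : A -> Prop) :
  d \is a GRing.unit -> s * t = 1 -> t * s = 1 ->
  s ^+ 4 = a *: s ^+ 3 + b *: s ^+ 2 + c *: s + d%:A ->
  closedS G -> G 1 -> G s -> G t -> G (t ^+ 2) -> forall m, G (ipow s t m).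
Proof.
move=> du st ts rel hG G1 Gs Gt Gt2.
have comb x y z w (k1 k2 k3 k4 : R) : G x -> G y -> G z -> G w ->
    G (k1 *: x + k2 *: y + k3 *: z + k4 *: w).
  move=> hx hy hz hw; apply: (closedD hG); [apply: (closedD hG); [apply: (closedD hG)|]|]; by apply: (closedZ _ hG).
have up : forall n, G (s ^+ n * t ^+ 2) /\ G (s ^+ n.+1 * t ^+ 2) /\
     G (s ^+ n.+2 * t ^+ 2) /\ G (s ^+ n.+3 * t ^+ 2).
  elim=> [|n [h0 [h1 [h2 h3]]]].
    split; first by rewrite expr0 mul1r.
    split; first by rewrite expr1 expr2 mulrA st mul1r.
    split; first by rewrite st_pow.
    by rewrite exprS -mulrA st_pow // mulr1.
  do 3 (split => //).
  have -> : s ^+ n.+4 = a *: s ^+ n.+3 + b *: s ^+ n.+2 + c *: s ^+ n.+1 + d *: s ^+ n.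
    rewrite -[n.+4]addn4 exprD rel !mulrDr -!scalerAr mulr1 -!exprD.
    by rewrite -exprSr addn3 addn2.
  rewrite !mulrDl -!scalerAl; exact: comb.
have trel n : t ^+ n = a *: t ^+ n.+1 + b *: t ^+ n.+2 + c *: t ^+ n.+3 + d *: t ^+ n.+4.
  rewrite -[t ^+ n]mulr1 (one_rel st rel) !mulrDr -!scalerAr -!exprD.
  by rewrite -exprSr addn2 addn3 addn4.
have down : forall n, G (t ^+ n * s) /\ G (t ^+ n.+1 * s) /\
     G (t ^+ n.+2 * s) /\ G (t ^+ n.+3 * s).
  elim=> [|n [h0 [h1 [h2 h3]]]].
    split; first by rewrite expr0 mul1r.
    split; first by rewrite expr1 ts.
    split; first by rewrite expr2 -mulrA ts mulr1.
    by rewrite exprSr -mulrA ts mulr1.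
  do 3 (split => //).
  have e := congr1 (fun y => y * s) (trel n); move: e => /=.
  rewrite !mulrDl -!scalerAl => /(solve_eq du) ->.
  apply: (closedZ _ hG); apply: (closedB hG) => //.
  do 2 (apply: (closedD hG); last by apply: (closedZ _ hG)).
  by apply: (closedZ _ hG).
case=> n /=.
  by have [_ [_ [h _]]] := up n; move: h; rewrite -addn2 exprD -mulrA st_pow // mulr1.
by have [_ [_ [h _]]] := down n; move: h; rewrite exprSr -mulrA ts mulr1.
Qed.

Lemma sub_inv (R : comUnitRingType) (A : algType R) (a b c d : R) (s t : A) :
  d \is a GRing.unit -> t * s = 1 ->
  s ^+ 4 = a *: s ^+ 3 + b *: s ^+ 2 + c *: s + d%:A -> subalg1 s t.
Proof.
move=> du ts rel.
have e := congr1 (GRing.mul t) rel; move: e => /=.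
rewrite !mulrDr -!scalerAr mulr1.
have -> : t * s ^+ 4 = s ^+ 3 := tcancel 1 3 ts.
have -> : t * s ^+ 3 = s ^+ 2 := tcancel 1 2 ts.
have -> : t * s ^+ 2 = s := tcancel 1 1 ts.
rewrite ts => /(solve_eq du) ->.
have hG := @subalg1_closed _ _ s.
apply: (closedZ _ hG); apply: (closedB hG); first exact: sub_pow.
apply: (closedD hG); [apply: (closedD hG)|]; apply: (closedZ _ hG).
- exact: sub_pow.
- exact: (@sub_pow _ _ s 1).
- exact: (@sub_pow _ _ s 0).
Qed.
Unset Implicit Arguments.

Theorem lemma3p1 (R : comUnitRingType) (A : algType R) (a b c d : R)
  (s1 s2 t1 t2 : A) :
  d \is a GRing.unit ->
  s1 * t1 = 1 -> t1 * s1 = 1 -> s2 * t2 = 1 -> t2 * s2 = 1 ->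
  s1 * s2 * s1 = s2 * s1 * s2 ->
  s1 ^+ 4 = a *: s1 ^+ 3 + b *: s1 ^+ 2 + c *: s1 + d%:A ->
  s2 ^+ 4 = a *: s2 ^+ 3 + b *: s2 ^+ 2 + c *: s2 + d%:A ->
  forall m : int,
    Ufull s1 s2 t1 t2 (s2 * ipow s1 t1 m * s2) /\
    Uprime s1 s2 t1 t2 (t2 * ipow s1 t1 m * t2) /\
    Uprime s1 s2 t1 t2 (t2 ^+ 2 * ipow s1 t1 m * t2).
Proof.
move=> du h11 h11' h22 h22' hb r1 r2.
have c1 X : X * s1 * t1 = X by rewrite -mulrA h11 mulr1.
have c1' X : X * t1 * s1 = X by rewrite -mulrA h11' mulr1.
have c2 X : X * s2 * t2 = X by rewrite -mulrA h22 mulr1.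
have c2' X : X * t2 * s2 = X by rewrite -mulrA h22' mulr1.
have hbX X : X * s1 * s2 * s1 = X * s2 * s1 * s2.
  have e : X * s1 * s2 * s1 = X * (s1 * s2 * s1) by rewrite !mulrA.
  by rewrite e hb !mulrA.
have I2 : t2 * t1 * t2 = t1 * t2 * t1.
  apply: (inv_uniq (y := s2 * s1 * s2)); first by rewrite !mulrA c2' c1' h22'.
  by rewrite -hb !mulrA c1 c2 h11.
have I3 : s2 * s1 * t2 = t1 * s2 * s1.
  by rewrite -[RHS]mulr1 -h22 !mulrA -hbX h11' !mul1r.
have I4 : s2 * t1 * t2 = t1 * t2 * s1.
  apply: (inv_uniq (y := s2 * s1 * t2)); first by rewrite !mulrA c2' c1' h22.
  by rewrite I3 !mulrA c1 c2 h11'.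
have I5 : s2 * t1 ^+ 2 * t2 = t1 * t2 ^+ 2 * s1.
  transitivity ((s2 * t1 * t2) * (s2 * t1 * t2)); first by rewrite expr2 !mulrA c2'.
  by rewrite I4 expr2 !mulrA c1.
have I6 : s2 ^+ 2 * s1 * t2 = s2 * t1 * s2 * s1.
  transitivity (s2 * (s2 * s1 * t2)); first by rewrite expr2 !mulrA.
  by rewrite I3 !mulrA.
have I7 : s2 ^+ 2 * t1 * t2 = t1 * t2 * s1 ^+ 2.
  transitivity (s2 * (s2 * t1 * t2)); first by rewrite expr2 !mulrA.
  by rewrite I4 !mulrA I4.
have I8 : s2 ^+ 2 * t1 ^+ 2 * t2 = t1 * t2 * s1 * t2 * s1.
  transitivity (s2 * (s2 * t1 ^+ 2 * t2)); first by rewrite expr2 !mulrA.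
  by rewrite I5 !mulrA I4.
have ut1 : subalg1 s1 t1 := sub_inv du h11' r1.
have ut2 : subalg1 s2 t2 := sub_inv du h22' r2.
have ut12 : subalg1 s1 (t1 ^+ 2) by rewrite expr2; exact: subalg_mul.
have ut22 : subalg1 s2 (t2 ^+ 2) by rewrite expr2; exact: subalg_mul.
have u10 : subalg1 s1 1 := @sub_pow _ _ s1 0.
have u20 : subalg1 s2 1 := @sub_pow _ _ s2 0.
have u11 : subalg1 s1 s1 := @sub_pow _ _ s1 1.
have u21 : subalg1 s2 s2 := @sub_pow _ _ s2 1.
have u12 : subalg1 s1 (s1 ^+ 2) := @sub_pow _ _ s1 2.
have u22 : subalg1 s2 (s2 ^+ 2) := @sub_pow _ _ s2 2.
have RED (L M : A) (Q : A -> Prop) : closedS Q ->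
    Q (L * 1 * M) -> Q (L * s1 * M) -> Q (L * t1 * M) -> Q (L * t1 ^+ 2 * M) ->
    forall m, Q (L * ipow s1 t1 m * M).
  move=> hQ q1 q2 q3 q4 m.
  exact: (red (G := fun x => Q (L * x * M)) du h11 h11' r1 (closed_conj L M hQ)).
have P1 : forall m, Ufull s1 s2 t1 t2 (s2 * ipow s1 t1 m * s2).
  apply: RED; first exact: Uf_closed.
  - have -> : s2 * 1 * s2 = 1 * s2 ^+ 2 * 1 by rewrite mulr1 mul1r mulr1 expr2.
    by apply: Uf1; apply: Up1; apply: mem3.
  - rewrite -hb; by apply: Uf1; apply: Up1; apply: mem3.
  - have -> : s2 * t1 * s2 = 1 * s2 * t1 * s2 * 1 by rewrite mulr1 mul1r.
    by apply: Uf1; apply: Up2; apply: mem5.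
  - have -> : s2 * t1 ^+ 2 * s2 = 1 * s2 * t1 ^+ 2 * s2 * 1 by rewrite mulr1 mul1r.
    by apply: Uf2; apply: mem5.
have P2 : forall m, Uprime s1 s2 t1 t2 (t2 * ipow s1 t1 m * t2).
  apply: RED; first exact: Up_closed.
  - have -> : t2 * 1 * t2 = 1 * t2 ^+ 2 * 1 by rewrite mulr1 mul1r mulr1 expr2.
    by apply: Up1; apply: mem3.
  - have -> : t2 * s1 * t2 = 1 * t2 * s1 * t2 * 1 by rewrite mulr1 mul1r.
    by apply: Up3; apply: mem5.
  - by rewrite I2; apply: Up1; apply: mem3.
  - have -> : t2 * t1 ^+ 2 * t2 = 1 * t2 * t1 ^+ 2 * t2 by rewrite mul1r.
    by apply: Up4; apply: mem4.
have P3 : forall m, Uprime s1 s2 t1 t2 (1 * ipow s1 t1 m * t2).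
  apply: RED; first exact: Up_closed.
  - by rewrite mul1r -[1 * t2]mulr1; apply: Up1; apply: mem3.
  - by rewrite mul1r -[s1 * t2]mulr1; apply: Up1; apply: mem3.
  - by rewrite mul1r -[t1 * t2]mulr1; apply: Up1; apply: mem3.
  - by rewrite mul1r -[t1 ^+ 2 * t2]mulr1; apply: Up1; apply: mem3.
have P4 : forall m, Uprime s1 s2 t1 t2 (s2 * ipow s1 t1 m * t2).
  apply: RED; first exact: Up_closed.
  - by rewrite mulr1 h22 -[1]mulr1 -[1 * 1]mulr1; apply: Up1; apply: mem3.
  - by rewrite I3; apply: Up1; apply: mem3.
  - by rewrite I4; apply: Up1; apply: mem3.
  - by rewrite I5; apply: Up1; apply: mem3.
have P5 : forall m, Uprime s1 s2 t1 t2 (s2 ^+ 2 * ipow s1 t1 m * t2).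
  apply: RED; first exact: Up_closed.
  - have -> : s2 ^+ 2 * 1 * t2 = 1 * s2 * 1 by rewrite mulr1 mul1r expr2 -mulrA h22 mulr1.
    by apply: Up1; apply: mem3.
  - have -> : s2 ^+ 2 * s1 * t2 = 1 * s2 * t1 * s2 * s1 by rewrite I6 mul1r.
    by apply: Up2; apply: mem5.
  - by rewrite I7; apply: Up1; apply: mem3.
  - have -> : s2 ^+ 2 * t1 ^+ 2 * t2 = t1 * t2 * s1 * t2 * s1 by rewrite I8.
    by apply: Up3; apply: mem5.
have tt2 : t2 ^+ 2 = d^-1 *: (s2 ^+ 2 - (a *: s2 + b *: 1 + c *: t2)).
  by apply: solve_eq => //; apply: rel2.
move=> m; split; first exact: P1.
split; first exact: P2.
have hU := Up_closed s1 s2 t1 t2.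
have -> : t2 ^+ 2 * ipow s1 t1 m * t2 = d^-1 *: (s2 ^+ 2 * ipow s1 t1 m * t2 -
   (a *: (s2 * ipow s1 t1 m * t2) + b *: (1 * ipow s1 t1 m * t2) + c *: (t2 * ipow s1 t1 m * t2))).
  by rewrite tt2 -!scalerAl !mulrBl !mulrDl -!scalerAl.
apply: (closedZ _ hU); apply: (closedB hU) => //.
apply: (closedD hU); [apply: (closedD hU)|]; apply: (closedZ _ hU) => //.
Qed.
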